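(* As formal power series in $q$, $$A(q):=\frac{1}{(q;q)_\infty}\sum_{n\ge1}\frac{(-1)^{n-1}n\,q^{\frac{n(n+1)}{2}}}{1-q^n}=\sum_{\lambda}t_s(\lambda)\,q^{|\lambda|},$$ where the sum on the right runs over all partitions $\lambda$ of all positive integers.
   Context: $(q;q)_\infty:=\prod_{n\ge1}(1-q^n)$. For a partition $\lambda$, $|\lambda|$ denotes the integer it partitions. Let $n_\lambda$ be the largest integer $n$ such that $\lambda$ contains parts of each size $1,2,\ldots,n$ (so $n_\lambda=0$ if $1$ is not a part), and let $m_k$ be the multiplicity of the part $k$ in $\lambda$. The signed triangular weight of $\lambda$ is $t_s(\lambda):=\sum_{k=1}^{n_\lambda}(-1)^{k-1}k\,m_k$ (so $t_s(\lambda)=0$ if $\lambda$ has no part equal to $1$). *)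

(* Defs.v *)
From mathcomp Require Import all_boot all_order all_algebra.
Set Implicit Arguments. Unset Strict Implicit. Unset Printing Implicit Defensive.
Import Order.TTheory GRing.Theory Num.Theory.
Local Open Scope ring_scope.

Definition fps := nat -> rat.

Definition fps_mul (f g : fps) : fps :=
  fun n => \sum_(i < n.+1) f i * g (n - i)%N.

(* Multiplicative inverse of a series with invertible constant term:
   g_0 = f_0^-1,  g_(n+1) = - f_0^-1 * sum_(i=1)^(n+1) f_i g_(n+1-i). *)
Fixpoint inv_seq (f : fps) (n : nat) : seq rat :=
  match n with
  | 0 => [:: (f 0%N)^-1]
  | n'.+1 => let s := inv_seq f n' in
             rcons s (- (f 0%N)^-1 * \sum_(i < n'.+1) f i.+1 * nth 0 s (n' - i)%N)
  end.
Definition fps_inv (f : fps) : fps := fun n => nth 0 (inv_seq f n) n.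

Definition fps_X (k : nat) : fps := fun m => (m == k)%:R.
Definition fps_1mX (n : nat) : fps := fun m => (m == 0)%:R - (m == n)%:R.

(* (q;q)_infty = prod_(n>=1) (1 - q^n): its coefficient of q^N is that of the
   finite product over 1 <= n <= N (factors with n > N do not contribute). *)
Definition qpoch_inf : fps :=
  fun N => (\prod_(1 <= n < N.+1) (1 - 'X^n) : {poly rat})`_N.

Definition A_term (n : nat) : fps :=
  fun m => (-1) ^+ n.-1 * n%:R * fps_mul (fps_X (n * n.+1)./2) (fps_inv (fps_1mX n)) m.

(* sum_(n>=1) A_term n; the n-th summand has valuation n(n+1)/2 >= n, so only
   n <= M contribute to the coefficient of q^M. *)
Definition A_sum : fps := fun M => \sum_(1 <= n < M.+1) A_term n M.

Definition A_series : fps := fps_mul (fps_inv qpoch_inf) A_sum.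

Definition is_partition (s : seq nat) : bool :=
  sorted geq s && all (fun x => 0 < x)%N s.

(* The list of all partitions of N (each partition of N has at most N parts,
   each at most N, so it is the nonzero part of some N-tuple over 'I_N.+1). *)
Definition partitions_of (N : nat) : seq (seq nat) :=
  undup [seq s <- [seq [seq x <- map val (val t) | (0 < x)%N] | t : N.-tuple 'I_N.+1]
          | is_partition s && (sumn s == N)].

Definition n_lam (s : seq nat) : nat :=
  \max_(n < (size s).+1 | all (fun k => k \in s) (iota 1 n)) (n : nat).

Definition ts (s : seq nat) : rat :=
  \sum_(1 <= k < (n_lam s).+1) (-1) ^+ k.-1 * k%:R * (count_mem k s)%:R.

(* Main.v *)
Require Import Defs.
From mathcomp Require Import all_boot all_order all_algebra.
From mathcomp Require Import zify ring.
Import Order.TTheory GRing.Theory Num.Theory.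
Local Open Scope ring_scope.

Lemma size_inv_seq f n : size (inv_seq f n) = n.+1.
Proof. by elim: n => [|n IH] //=; rewrite size_rcons IH. Qed.

Lemma nth_inv_seq f n j : (j <= n)%N -> nth 0 (inv_seq f n) j = fps_inv f j.
Proof.
elim: n => [|n IH] Hj; first by move: Hj; rewrite leqn0 => /eqP ->.
rewrite leq_eqVlt in Hj; case/orP: Hj => [/eqP ->|Hj] //.
by rewrite /= nth_rcons size_inv_seq Hj IH.
Qed.

Lemma fps_inv0 f : fps_inv f 0 = (f 0%N)^-1.
Proof. by []. Qed.

Lemma fps_invS f n : fps_inv f n.+1 =
  - (f 0%N)^-1 * \sum_(i < n.+1) f i.+1 * fps_inv f (n - i)%N.
Proof.
rewrite {1}/fps_inv /= nth_rcons size_inv_seq ltnn eqxx.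
congr (_ * _); apply: eq_bigr => i _; by rewrite nth_inv_seq // leq_subr.
Qed.

Lemma fps_mul_inv f n : f 0%N != 0 -> fps_mul f (fps_inv f) n = (n == 0%N)%:R.
Proof.
move=> Hf; case: n => [|n].
  by rewrite /fps_mul big_ord1 subn0 fps_inv0 mulfV.
rewrite /fps_mul big_ord_recl subn0 fps_invS /=.
rewrite mulrA mulrN mulfV // mulN1r.
under [X in _ + X]eq_bigr => i _ do rewrite subSS.
by rewrite addNr.
Qed.

Lemma sum_delta (F : nat -> rat) (k j : nat) :
  \sum_(i < k) ((i : nat) == j)%:R * F i = (j < k)%:R * F j.
Proof.
elim: k => [|k IH]; first by rewrite big_ord0 ltn0 mul0r.
rewrite big_ord_recr /= IH.
case: (ltngtP j k) => H.
- by rewrite (ltn_trans H (ltnSn k)) mul0r addr0.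
- by rewrite ltnNge H /= !mul0r addr0.
- by rewrite H ltnSn mul0r add0r.
Qed.

Definition tri n := (n * n.+1)./2.
Lemma triC n : tri n = 'C(n.+1, 2).
Proof. by rewrite /tri bin2 /= mulnC. Qed.
Lemma triS n : tri n.+1 = (tri n + n.+1)%N.
Proof. by rewrite !triC binS bin1 addnC. Qed.
Lemma tri_ge n : (n <= tri n)%N.
Proof. by rewrite triC binS bin1 leq_addl. Qed.
Definition cong n (p q : {poly rat}) := forall i, (i < n)%N -> p`_i = q`_i.

Lemma cong_refl n p : cong n p p. Proof. by []. Qed.
Lemma cong_sym n p q : cong n p q -> cong n q p.
Proof. by move=> H i Hi; rewrite H. Qed.
Lemma cong_trans n p q r : cong n p q -> cong n q r -> cong n p r.
Proof. by move=> H1 H2 i Hi; rewrite H1 ?H2. Qed.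
Lemma cong_add n p p' q q' : cong n p p' -> cong n q q' -> cong n (p + q) (p' + q').
Proof. by move=> H1 H2 i Hi; rewrite !coefD H1 ?H2. Qed.
Lemma cong_opp n p p' : cong n p p' -> cong n (- p) (- p').
Proof. by move=> H1 i Hi; rewrite !coefN H1. Qed.
Lemma cong_mul n p p' q q' : cong n p p' -> cong n q q' -> cong n (p * q) (p' * q').
Proof.
move=> H1 H2 i Hi; rewrite !coefM; apply: eq_bigr => j _.
have Hj : (j < n)%N by have := ltn_ord j; lia.
have Hij : (i - j < n)%N by lia.
by rewrite H1 // H2.
Qed.
Lemma cong_Xn0 n e r : (n <= e)%N -> cong n ('X^e * r) 0.
Proof. by move=> He i Hi; rewrite coefXnM coef0 (leq_trans Hi He). Qed.
Lemma cong_prod n (I : Type) (s : seq I) (P : pred I) (F G : I -> {poly rat}) :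
  (forall i, P i -> cong n (F i) (G i)) ->
  cong n (\prod_(i <- s | P i) F i) (\prod_(i <- s | P i) G i).
Proof.
move=> H; apply: (big_ind2 (cong n)) => //.
by move=> ? ? ? ? ? ?; apply: cong_mul.
Qed.
Lemma cong_sum n (I : Type) (s : seq I) (P : pred I) (F G : I -> {poly rat}) :
  (forall i, P i -> cong n (F i) (G i)) ->
  cong n (\sum_(i <- s | P i) F i) (\sum_(i <- s | P i) G i).
Proof.
move=> H; apply: (big_ind2 (cong n)) => //.
by move=> ? ? ? ? ? ?; apply: cong_add.
Qed.

Definition trf N (f : fps) : {poly rat} := \poly_(i < N.+1) f i.

Lemma fps_mul_tr N f g i : (i <= N)%N -> fps_mul f g i = (trf N f * trf N g)`_i.
Proof.
move=> Hi; rewrite coefM /fps_mul; apply: eq_bigr => j _.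
rewrite /trf !coef_poly.
have Hj : (j < N.+1)%N by have := ltn_ord j; lia.
have Hij : (i - j < N.+1)%N by lia.
by rewrite Hj Hij.
Qed.

Lemma geom (x : {poly rat}) n : (1 - x) * \sum_(a < n) x ^+ a = 1 - x ^+ n.
Proof.
elim: n => [|n IH]; first by rewrite big_ord0 mulr0 expr0 subrr.
rewrite big_ord_recr /= mulrDr IH exprS; ring.
Qed.

Definition Qp N : {poly rat} := \prod_(1 <= n < N.+1) (1 - 'X^n).

Lemma qpoch_coef N i : (i <= N)%N -> qpoch_inf i = (Qp N)`_i.
Proof.
move=> Hi; rewrite /qpoch_inf /Qp [in RHS](big_cat_nat _ (m:=1) (n:=i.+1)) //=.
have H : cong i.+1 (\prod_(i.+1 <= n < N.+1) (1 - 'X^n)) 1.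
  rewrite big_nat_cond.
  apply: cong_trans (@cong_prod _ _ _ _ _ (fun _ => 1) _) _.
  - move=> n /andP[/andP[Hn _] _] k Hk.
    rewrite coefB coefXn coef1.
    have -> : (k == n) = false by apply/negbTE; lia.
    by rewrite subr0.
  - by rewrite big1.
have := @cong_mul _ _ _ _ _ (cong_refl i.+1 (\prod_(1 <= i0 < i.+1) (1 - 'X^i0))) H.
by move=> /(_ i (ltnSn i)); rewrite mulr1 => ->.
Qed.


Lemma trf_cong N f (p : {poly rat}) : (forall i, (i <= N)%N -> f i = p`_i) -> cong N.+1 (trf N f) p.
Proof. by move=> H i Hi; rewrite /trf coef_poly Hi H. Qed.

Lemma cong_inv N f : f 0%N != 0 -> cong N.+1 (trf N f * trf N (fps_inv f)) 1.
Proof. by move=> Hf i Hi; rewrite -fps_mul_tr // fps_mul_inv // coef1. Qed.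

Lemma cong_1mXbig n e : (n <= e)%N -> cong n (1 - 'X^e) 1.
Proof.
move=> He; rewrite -[X in cong _ _ X]subr0; apply: cong_add => //.
apply: cong_opp; rewrite -[X in cong _ X _]mulr1; exact: cong_Xn0.
Qed.

Definition S N n : {poly rat} := \sum_(a < N.+1) ('X^n) ^+ a.

Lemma geomS N n : (0 < n)%N -> cong N.+1 ((1 - 'X^n) * S N n) 1.
Proof.
move=> Hn; rewrite /S geom -exprM; apply: cong_1mXbig.
by rewrite leq_pmull.
Qed.

Lemma inv1mX N n : (0 < n)%N -> cong N.+1 (trf N (fps_inv (fps_1mX n))) (S N n).
Proof.
move=> Hn.
have H1 : cong N.+1 (trf N (fps_1mX n)) (1 - 'X^n).
  by apply: trf_cong => i _; rewrite /fps_1mX coefB coef1 coefXn.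
have H2 : fps_1mX n 0%N != 0.
  by rewrite /fps_1mX; have -> : (0 == n)%N = false by lia.
have H3 := @cong_inv N _ H2.
set J := trf N (fps_inv _) in H3 *.
set F := trf N (fps_1mX n) in H1 H3 *.
apply: (@cong_trans _ _ (J * ((1 - 'X^n) * S N n))).
  rewrite -[X in cong _ X _]mulr1; apply: cong_mul => //; apply: cong_sym; exact: geomS.
rewrite mulrA [J * _]mulrC.
rewrite -[X in cong _ _ X]mul1r; apply: cong_mul => //.
apply: cong_trans H3; apply: cong_mul => //; exact: cong_sym.
Qed.

Lemma qpoch0 : qpoch_inf 0%N = 1.
Proof. by rewrite /qpoch_inf big_geq // coef1. Qed.

Lemma cong_QG N : cong N.+1 (Qp N * trf N (fps_inv qpoch_inf)) 1.
Proof.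
have H : cong N.+1 (Qp N) (trf N qpoch_inf).
  by apply: cong_sym; apply: trf_cong => i Hi; rewrite (@qpoch_coef N i Hi).
have Hq : qpoch_inf 0%N != 0 by rewrite qpoch0 oner_neq0.
apply: cong_trans (@cong_inv N _ Hq).
exact: cong_mul.
Qed.

Arguments cong_mul {n p p' q q'}.
Arguments cong_add {n p p' q q'}.
Arguments cong_trans {n p q r}.
Arguments cong_sym {n p q}.
Arguments cong_opp {n p p'}.
Arguments inv1mX {N n}.

Definition Bp N n : {poly rat} := ((-1) ^+ n.-1 * n%:R)%:P * ('X^(tri n) * S N n).

Lemma A_term_coef N n i : (0 < n)%N -> (i <= N)%N -> A_term n i = (Bp N n)`_i.
Proof.
move=> Hn Hi; rewrite /A_term /Bp coefCM; congr (_ * _).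
rewrite (fps_mul_tr N) //.
have HX : cong N.+1 (trf N (fps_X (tri n))) 'X^(tri n).
  by apply: trf_cong => j _; rewrite /fps_X coefXn.
by apply: (cong_mul HX (inv1mX Hn)); rewrite ltnS.
Qed.

Definition Apoly N : {poly rat} := \sum_(k < N) Bp N k.+1.

Lemma A_sum_cong N : cong N.+1 (trf N A_sum) (Apoly N).
Proof.
apply: trf_cong => i Hi.
rewrite /A_sum /Apoly coef_sum.
rewrite (@big_nat_widen _ _ _ 1 i.+1 N.+1) ?ltnS //.
rewrite big_mkcond /= [RHS](eq_bigr (fun k : 'I_N => (Bp N k.+1)`_i)) //.
rewrite -(big_mkord xpredT (fun k => (Bp N k.+1)`_i)).
rewrite -(big_add1 _ _ 0 N.+1 xpredT (fun k => (Bp N k)`_i)).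
rewrite big_nat_cond [RHS]big_nat_cond; apply: eq_bigr => n /andP[/andP[Hn1 HnN] _].
case: ifP => Hni; first by rewrite (@A_term_coef N n i).
rewrite /Bp coefCM coefXnM.
have -> : (i < tri n)%N by have := tri_ge n; lia.
by rewrite mulr0.
Qed.

Section TSide.
Variable N : nat.
Definition V := {ffun 'I_N -> 'I_N.+1}.
Definition wt (m : V) : nat := \sum_(j < N) (j.+1 * m j)%N.
Definition h (k j : 'I_N) (a : nat) : rat :=
  if (j < k)%N then (0 < a)%:R else if j == k then a%:R else 1.
Definition ck (k : 'I_N) : rat := (-1) ^+ k * (k.+1)%:R.
Definition tsv (m : V) : rat := \sum_(k < N) ck k * \prod_(j < N) h k j (m j).
Definition Tp : {poly rat} := \sum_(m : V) (tsv m)%:P * 'X^(wt m).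
Definition E (k j : 'I_N) : {poly rat} :=
  \sum_(a < N.+1) (h k j a)%:P * ('X^(j.+1)) ^+ a.

Lemma Tp_prod : Tp = \sum_(k < N) (ck k)%:P * \prod_(j < N) E k j.
Proof.
rewrite /Tp /E.
under [RHS]eq_bigr => k _ do rewrite bigA_distr_bigA mulr_sumr.
rewrite exchange_big /=; apply: eq_bigr => m _.
rewrite /tsv rmorph_sum mulr_suml; apply: eq_bigr => k _.
rewrite big_split /= -rmorph_prod.
under [X in _ * (_ * X)]eq_bigr => j _ do rewrite -exprM.
rewrite prodrXr rmorphM mulrA //.
Qed.


Lemma sum_tri n : (\sum_(0 <= i < n) i.+1)%N = tri n.
Proof.
elim: n => [|n IH]; first by rewrite big_geq.
by rewrite big_nat_recr // IH triS.
Qed.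

Lemma sum_le (k : 'I_N) : (\sum_(j < N | (j <= k)%N) (j : nat).+1)%N = tri k.+1.
Proof.
rewrite -(big_mkord (fun j => (j <= k)%N) (fun j => j.+1)).
rewrite -sum_tri (@big_nat_widen _ _ _ 0 k.+1 N) //.
Qed.

Lemma prodU (k : 'I_N) : \prod_(j < N) ((if (j <= k)%N then 'X^(j.+1) else 1) *
   (if j == k then S N k.+1 else 1)) = 'X^(tri k.+1) * S N k.+1.
Proof.
rewrite big_split /= -!big_mkcond /= big_pred1_eq prodrXr sum_le //.
Qed.

Lemma sumD (x : {poly rat}) n : (1 - x) * \sum_(a < n.+1) (a%:R)%:P * x ^+ a =
  x * \sum_(a < n) x ^+ a - (n%:R)%:P * x ^+ n.+1.
Proof.
elim: n => [|n IH].
  by rewrite big_ord1 big_ord0 /= mulr0 !mul0r subr0 mulr0.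
rewrite big_ord_recr /= mulrDr IH [in RHS]big_ord_recr /= !exprS.
rewrite -!natr1 !rmorphD /= rmorph1 ; ring.
Qed.

Lemma cong_hi J r : (0 < J)%N -> cong N.+1 (r * ('X^J) ^+ N.+1) 0.
Proof. by move=> HJ; rewrite -exprM mulrC; apply: cong_Xn0; rewrite leq_pmull. Qed.

Lemma cong_subhi J c p p' : (0 < J)%N -> cong N.+1 p p' ->
  cong N.+1 (p - c * ('X^J) ^+ N.+1) p'.
Proof.
move=> HJ H; rewrite -[p']subr0; apply: cong_add => //; apply: cong_opp.
exact: cong_hi.
Qed.

Lemma factor (k j : 'I_N) : cong N.+1 ((1 - 'X^(j.+1)) * E k j)
  ((if (j <= k)%N then 'X^(j.+1) else 1) * (if j == k then S N k.+1 else 1)).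
Proof.
rewrite /E /h; set x := 'X^(j.+1).
case: (ltngtP j k) => Hjk.
- have -> : (j == k) = false by apply/eqP => E0; move: Hjk; rewrite E0 ltnn.
  have -> : \sum_(a < N.+1) ((0 < a)%:R)%:P * x ^+ a = x * \sum_(a < N) x ^+ a.
    rewrite big_ord_recl /= mul0r add0r mulr_sumr; apply: eq_bigr => a _.
    by rewrite mul1r exprS.
  have -> : (1 - x) * (x * \sum_(a < N) x ^+ a) = x - 1 * x ^+ N.+1.
    by rewrite mulrCA geom mulrBr mulr1 -exprS mul1r.
  by rewrite mulr1; apply: cong_subhi.
- have -> : (j == k) = false by apply/eqP => E0; move: Hjk; rewrite E0 ltnn.
  have -> : \sum_(a < N.+1) (1%:P : {poly rat}) * x ^+ a = \sum_(a < N.+1) x ^+ a.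
    by apply: eq_bigr => a _; rewrite mul1r.
  rewrite geom mulr1 -[x ^+ N.+1]mul1r.
  by apply: cong_subhi.
- have Hjk' : j = k by apply: val_inj.
  rewrite Hjk' eqxx -Hjk' sumD /S -/x big_ord_recr /= mulrDr -exprS.
  apply: cong_subhi => //.
  apply: cong_sym; rewrite -[X in cong _ _ X]addr0; apply: cong_add => //.
  rewrite -[x ^+ N.+1]mul1r; exact: cong_hi.
Qed.

Lemma Qp_ord : Qp N = \prod_(j < N) (1 - 'X^(j.+1)).
Proof. by rewrite /Qp big_add1 /= big_mkord. Qed.

Lemma QT_cong : cong N.+1 (Qp N * Tp) (Apoly N).
Proof.
rewrite Tp_prod mulr_sumr /Apoly; apply: cong_sum => k _.
rewrite mulrCA /Bp; apply: cong_mul => //.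
rewrite Qp_ord -big_split /= -prodU.
apply: cong_prod => j _; exact: factor.
Qed.

End TSide.

Arguments wt {N}.
Arguments tsv {N}.
Arguments h {N}.
Arguments ck {N}.

Section Comb.
Variable N : nat.

Definition part (m : V N) : seq nat :=
  sort geq (flatten [seq nseq (m j) (j : nat).+1 | j <- enum 'I_N]).

Lemma count_part m x : count_mem x (part m) = (\sum_(j < N) ((j.+1 == x) * m j))%N.
Proof.
rewrite /part count_sort count_flatten -map_comp sumnE big_map big_enum /=.
by apply: eq_bigr => j _; rewrite count_nseq.
Qed.

Lemma count_part_ord m (k : 'I_N) : count_mem (k : nat).+1 (part m) = m k.
Proof.
rewrite count_part (bigD1 k) //= eqxx mul1n big1 ?addn0 // => j Hj.
have -> : (j.+1 == k.+1) = false by rewrite eqSS; apply/negbTE.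
by [].
Qed.

Lemma count_part_out m x : (x == 0)%N || (N < x)%N -> count_mem x (part m) = 0%N.
Proof.
move=> Hx; rewrite count_part big1 // => j _.
have -> : (j.+1 == x) = false.
  by apply/negbTE/eqP => E0; move: Hx; rewrite -E0 /=; have := ltn_ord j; lia.
by [].
Qed.

Lemma mem_part m x : (x \in part m) = (0 < count_mem x (part m))%N.
Proof. by rewrite -has_count has_pred1. Qed.

Lemma sumn_part m : sumn (part m) = wt m.
Proof.
rewrite /part (perm_sumn (permEl (perm_sort _ _))) sumn_flatten -map_comp sumnE big_map big_enum /=.
by apply: eq_bigr => j _; rewrite sumn_nseq mulnC.
Qed.

Lemma geq_trans : transitive geq.
Proof. by move=> a b c /= H1 H2; apply: leq_trans H2 H1. Qed.
Lemma geq_anti : antisymmetric geq.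
Proof. by move=> a b /andP[H1 H2]; apply/eqP; rewrite eqn_leq; apply/andP; split. Qed.
Lemma geq_tot : total geq.
Proof. by move=> a b; apply: leq_total. Qed.

Lemma part_partition m : is_partition (part m).
Proof.
rewrite /is_partition sort_sorted ?geq_tot //=.
apply/allP => x Hx; rewrite lt0n; apply/negP => /eqP x0.
by move: Hx; rewrite mem_part count_part_out ?x0.
Qed.

Lemma part_inj : injective part.
Proof.
move=> m1 m2 H; apply/ffunP => k; apply/val_inj.
by have := count_part_ord m1 k; rewrite H count_part_ord.
Qed.

Lemma size_le_sumn s : all (fun x => 0 < x)%N s -> (size s <= sumn s)%N.
Proof. by elim: s => //= x s IH /andP[H1 H2]; have := IH H2; lia. Qed.
Lemma mem_le_sumn s x : x \in s -> (x <= sumn s)%N.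
Proof.
elim: s => //= y s IH; rewrite in_cons => /orP[/eqP ->|H]; first by lia.
by have := IH H; lia.
Qed.

Definition mult (s : seq nat) : V N := [ffun j : 'I_N => inord (count_mem (j : nat).+1 s)].

Lemma part_mult s : is_partition s -> sumn s = N -> part (mult s) = s.
Proof.
move=> /andP[Hs Hp] HN.
apply: (sorted_eq geq_trans geq_anti) => //.
  by case/andP: (part_partition (mult s)).
rewrite /perm_eq; apply/allP => x _; apply/eqP.
case: (boolP ((x == 0)%N || (N < x)%N)) => Hx.
  rewrite count_part_out //; apply/esym/count_memPn/negP => Hxs.
  case/orP: Hx => [/eqP x0|Hx].
    by move/allP: Hp => /(_ x Hxs); rewrite x0.
  by have := @mem_le_sumn s x Hxs; rewrite HN; lia.
have Hk : (x.-1 < N)%N by lia.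
have -> : x = (Ordinal Hk : nat).+1 by rewrite /=; lia.
rewrite count_part_ord ffunE inordK // ltnS.
apply: leq_trans (count_size _ _) _; rewrite -HN; exact: size_le_sumn.
Qed.

Lemma mem_partitions s : (s \in partitions_of N) = is_partition s && (sumn s == N).
Proof.
rewrite /partitions_of mem_undup mem_filter.
case: (boolP (is_partition s && (sumn s == N))) => //= /andP[Hp /eqP HN].
have Hle : {in s ++ nseq (N - size s) 0%N, forall x, (x <= N)%N}.
  move=> x; rewrite mem_cat => /orP[H|]; first by rewrite -HN mem_le_sumn.
  by move/nseqP => [-> _].
have Hsize : (size s <= N)%N by rewrite -HN; case/andP: Hp => _; exact: size_le_sumn.
pose ss := map (@inord N) (s ++ nseq (N - size s) 0%N).
have Hsz : size ss == N.
  by rewrite size_map size_cat size_nseq subnKC.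
have Hmap : [seq (val : 'I_N.+1 -> nat) i | i <- ss] = s ++ nseq (N - size s) 0%N.
  rewrite -map_comp -[RHS]map_id; apply/eq_in_map => x /Hle Hx /=; by rewrite inordK.
apply/imageP; exists (Tuple Hsz) => //=.
rewrite Hmap filter_cat filter_nseq /= cats0.
by case/andP: Hp => _ /all_filterP ->.
Qed.

End Comb.

Lemma nlamP s n : (n <= n_lam s)%N = all (fun k => k \in s) (iota 1 n).
Proof.
set P := fun n => all (fun k => k \in s) (iota 1 n).
have Hsz : forall n, P n -> (n <= size s)%N.
  move=> k Hk; have := uniq_leq_size (iota_uniq 1 k) (allP Hk).
  by rewrite size_iota.
have Hdown : forall n k, P n -> (k <= n)%N -> P k.
  move=> n0 k H Hk; apply/allP => x; rewrite mem_iota => Hx; apply: (allP H).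
  rewrite mem_iota; lia.
apply/idP/idP.
- case: n => [|n] Hn; first by [].
  apply/negPn/negP => HP.
  have : (n_lam s <= n)%N.
    apply/bigmax_leqP => i Pi; rewrite -ltnS; apply/negPn/negP; rewrite -leqNgt => Hi.
    by move/negP: HP; apply; exact: (Hdown i n.+1 Pi Hi).
  by move: Hn; clear; lia.
- move=> HP; have Hlt : (n < (size s).+1)%N by rewrite ltnS; exact: Hsz.
  exact: (@leq_bigmax_cond _ (fun i : 'I_(size s).+1 => P i) (fun i => (i : nat)) (Ordinal Hlt) HP).
Qed.

Arguments part {N}.
Arguments mult {N}.

Section Comb2.
Variable N : nat.

Lemma prod_h (m : V N) (k : 'I_N) :
  \prod_(j < N) h k j (m j) = ([forall j : 'I_N, (j <= k)%N ==> (0 < m j)%N])%:R * (m k)%:R.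
Proof.
case: (boolP [forall j : 'I_N, (j <= k)%N ==> (0 < m j)%N]) => H.
- rewrite (bigD1 k) //= big1 ?mulr1 ?mul1r.
    by rewrite /h ltnn eqxx.
  move=> j Hj; rewrite /h; case: ifP => Hjk.
    by move/forallP: H => /(_ j); rewrite (ltnW Hjk) /= => ->.
  by rewrite (negbTE Hj).
- move/forallPn: H => [j0]; rewrite negb_imply => /andP[Hj0 Hm].
  rewrite (bigD1 j0) //= mul0r.
  have -> : h k j0 (m j0) = 0; last by rewrite mul0r.
  rewrite /h; move: Hm; rewrite lt0n negbK => /eqP ->.
  case: ifP => // Hlt; have -> : j0 == k by apply/eqP/val_inj => /=; lia.
  by [].
Qed.

Lemma nlam_part_le (m : V N) : (n_lam (part m) <= N)%N.
Proof.
rewrite leqNgt; apply/negP => H.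
move: H; rewrite nlamP => /allP /(_ N.+1).
rewrite mem_iota => /(_ (leqnn _)).
by rewrite mem_part count_part_out // ltnSn orbT.
Qed.

Lemma all_part (m : V N) (k : 'I_N) :
  all (fun x => x \in part m) (iota 1 k.+1) = [forall j : 'I_N, (j <= k)%N ==> (0 < m j)%N].
Proof.
apply/allP/forallP.
- move=> H j; apply/implyP => Hj.
  have := H j.+1; rewrite mem_iota mem_part count_part_ord; apply; lia.
- move=> H x; rewrite mem_iota => Hx.
  have Hk : (x.-1 < N)%N by have := ltn_ord k; lia.
  pose j := Ordinal Hk.
  have Ej : x = (j : nat).+1 by rewrite /j /=; lia.
  rewrite mem_part Ej count_part_ord.
  have := H j; move/implyP; apply; rewrite /j /=; lia.
Qed.

Lemma ts_part (m : V N) : ts (part m) = tsv m.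
Proof.
rewrite /ts (@big_nat_widen _ _ _ 1 (n_lam (part m)).+1 N.+1) ?ltnS ?nlam_part_le //.
rewrite big_mkcond /= big_add1 /= big_mkord /tsv; apply: eq_bigr => k _.
rewrite prod_h ltnS nlamP all_part /ck.
case: ifP => _; last by rewrite !mul0r mulr0.
by rewrite mul1r count_part_ord.
Qed.

End Comb2.

Lemma sum_partitions N :
  \sum_(s <- partitions_of N) ts s = \sum_(m : V N | wt m == N) tsv m.
Proof.
have Hperm : perm_eq (partitions_of N) [seq part m | m <- enum [pred m : V N | wt m == N]].
  apply: uniq_perm; first exact: undup_uniq.
    by rewrite map_inj_in_uniq ?enum_uniq // => m1 m2 _ _; apply: part_inj.
  move=> s; rewrite mem_partitions; apply/idP/mapP.
  - move=> /andP[Hp /eqP HN]; exists (mult s); last by rewrite part_mult.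
    by rewrite mem_enum inE -sumn_part part_mult // HN.
  - move=> [m]; rewrite mem_enum inE => /eqP Hw ->.
    by rewrite part_partition sumn_part Hw eqxx.
rewrite (perm_big _ Hperm) big_map big_enum /=.
by apply: eq_bigr => m _; apply: ts_part.
Qed.

Lemma Tp_coef N : (Tp N)`_N = \sum_(m : V N | wt m == N) tsv m.
Proof.
rewrite /Tp coef_sum [RHS]big_mkcond; apply: eq_bigr => m _.
rewrite coefCM coefXn eq_sym; case: (wt m == N) => /=.
  by rewrite mulr1.
by rewrite mulr0.
Qed.

Theorem theorem1p3 (N : nat) :
  A_series N = if N is 0 then 0 else \sum_(s <- partitions_of N) ts s.
Proof.
have H1 : A_series N = (Tp N)`_N.
  rewrite /A_series (fps_mul_tr N) //.
  set G := trf N (fps_inv qpoch_inf).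
  have : cong N.+1 (G * trf N A_sum) (Tp N).
    apply: cong_trans (cong_mul (cong_refl _ G)
       (cong_trans (A_sum_cong N) (cong_sym (QT_cong N)))) _.
    rewrite mulrA [G * _]mulrC -[X in cong _ _ X]mul1r.
    exact: (cong_mul (cong_QG N) (cong_refl _ _)).
  by move=> /(_ N (ltnSn N)).
rewrite H1 Tp_coef; case: N {H1} => [|n].
  by rewrite big1 // => m _; rewrite /tsv big_ord0.
by rewrite sum_partitions.
Qed.
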